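(* Let $0<q<1$ and $c,d,z_1,z_2\in\mathbb C$ with $cz_1\ne q^{-r}$ and $dz_2\ne q^{-r}$ for all integers $r\ge1$. Then the double series below converges absolutely and $$\sum_{m,n=0}^\infty\frac{q^{m^2-mn+n^2}\,h_{m,n}(z_1,z_2|q)}{(q,cz_1q;q)_m\,(q,dz_2q;q)_n}\,c^md^n=\frac{A_q(cd)}{(cz_1q,dz_2q;q)_\infty}.$$
   Context: $(a;q)_n=\prod_{j=0}^{n-1}(1-aq^j)$, $(a;q)_\infty=\prod_{j\ge0}(1-aq^j)$, $(a_1,\dots,a_r;q)_n=\prod_i(a_i;q)_n$, $\left[{m\atop k}\right]_q=\frac{(q;q)_m}{(q;q)_k(q;q)_{m-k}}$, $m\wedge n=\min\{m,n\}$. The second $q$-$2D$-Hermite polynomials are $$h_{m,n}(z_1,z_2|q)=\sum_{j=0}^{m\wedge n}\left[{m\atop j}\right]_q\left[{n\atop j}\right]_q q^{(m-j)(n-j)}(-1)^j(q;q)_j\,z_1^{m-j}z_2^{n-j}.$$ The Ramanujan function is $A_q(z)=\sum_{n=0}^\infty\frac{q^{n^2}}{(q;q)_n}(-z)^n$. *)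

(* Defs.v *)
From Stdlib Require Import Reals Lra Lia.
Open Scope R_scope.

Record Cx := mkC { Cre : R; Cim : R }.

Definition RtoC (x : R) : Cx := mkC x 0.
Definition C0 : Cx := RtoC 0.
Definition C1 : Cx := RtoC 1.
Definition Cadd (z w : Cx) : Cx := mkC (Cre z + Cre w) (Cim z + Cim w).
Definition Copp (z : Cx) : Cx := mkC (- Cre z) (- Cim z).
Definition Csub (z w : Cx) : Cx := Cadd z (Copp w).
Definition Cmul (z w : Cx) : Cx :=
  mkC (Cre z * Cre w - Cim z * Cim w) (Cre z * Cim w + Cim z * Cre w).
Definition Cinv (z : Cx) : Cx :=
  let n2 := Cre z * Cre z + Cim z * Cim z in
  mkC (Cre z / n2) (- Cim z / n2).
Definition Cdiv (z w : Cx) : Cx := Cmul z (Cinv w).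
Fixpoint Cpow (z : Cx) (n : nat) : Cx :=
  match n with O => C1 | S k => Cmul z (Cpow z k) end.
Definition Cnorm (z : Cx) : R := sqrt (Cre z * Cre z + Cim z * Cim z).

Fixpoint Csum (f : nat -> Cx) (n : nat) : Cx :=
  match n with O => C0 | S k => Cadd (Csum f k) (f k) end.
Fixpoint Cprod (f : nat -> Cx) (n : nat) : Cx :=
  match n with O => C1 | S k => Cmul (Cprod f k) (f k) end.
Fixpoint Rsum (f : nat -> R) (n : nat) : R :=
  match n with O => 0 | S k => Rsum f k + f k end.

Definition C_cv (u : nat -> Cx) (l : Cx) : Prop :=
  forall eps : R, eps > 0 ->
    exists N : nat, forall n : nat, (n >= N)%nat -> Cnorm (Csub (u n) l) < eps.

Definition qpoch (a : Cx) (q : R) (n : nat) : Cx :=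
  Cprod (fun j => Csub C1 (Cmul a (RtoC (q ^ j)))) n.

(** q-binomial coefficient [m choose k]_q, for k <= m *)
Definition qbinom (q : R) (m k : nat) : Cx :=
  Cdiv (qpoch (RtoC q) q m)
       (Cmul (qpoch (RtoC q) q k) (qpoch (RtoC q) q (m - k))).

Definition h2D (q : R) (m n : nat) (z1 z2 : Cx) : Cx :=
  Csum (fun j =>
    Cmul (Cmul (Cmul (qbinom q m j) (qbinom q n j))
               (Cmul (RtoC (q ^ ((m - j) * (n - j)) * (-1) ^ j))
                     (qpoch (RtoC q) q j)))
         (Cmul (Cpow z1 (m - j)) (Cpow z2 (n - j))))
    (S (Nat.min m n)).

Definition Aq_partial (q : R) (z : Cx) (N : nat) : Cx :=
  Csum (fun n => Cmul (Cdiv (RtoC (q ^ (n * n))) (qpoch (RtoC q) q n))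
                      (Cpow (Copp z) n)) N.

(** general term of the double series of Corollary 7.2:
    q^{m^2-mn+n^2} h_{m,n}(z1,z2|q) c^m d^n / ((q,c z1 q;q)_m (q,d z2 q;q)_n)
    (m^2 - mn + n^2 = m*m + n*n - m*n is nonnegative, so nat subtraction is exact) *)
Definition cor72_term (q : R) (c d z1 z2 : Cx) (m n : nat) : Cx :=
  Cdiv (Cmul (Cmul (RtoC (q ^ (m * m + n * n - m * n))) (h2D q m n z1 z2))
             (Cmul (Cpow c m) (Cpow d n)))
       (Cmul (Cmul (qpoch (RtoC q) q m) (qpoch (Cmul (Cmul c z1) (RtoC q)) q m))
             (Cmul (qpoch (RtoC q) q n) (qpoch (Cmul (Cmul d z2) (RtoC q)) q n))).

(* Main.v *)
Require Import Defs.
From Stdlib Require Import Reals.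
From Stdlib Require Import Lra Lia Field Ring.
Require Import Defs.
From Coquelicot Require Complex.
Open Scope R_scope.


Lemma Cx_ext (z w : Cx) : Cre z = Cre w -> Cim z = Cim w -> z = w.
Proof. destruct z, w; simpl; intros; subst; reflexivity. Qed.

Lemma Cx_ring : ring_theory C0 C1 Cadd Cmul Csub Copp (@eq Cx).
Proof.
  constructor; intros; apply Cx_ext; unfold C0, C1, RtoC, Cadd, Cmul, Csub, Copp; simpl; ring.
Qed.

Lemma Cx_nz (z : Cx) : z <> C0 -> Cre z * Cre z + Cim z * Cim z <> 0.
Proof.
  intros Hz H. apply Hz. destruct z as [a b]; simpl in *.
  assert (a = 0) by nra. assert (b = 0) by nra. subst. reflexivity.
Qed.

Lemma Cx_field : field_theory C0 C1 Cadd Cmul Csub Copp Cdiv Cinv (@eq Cx).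
Proof.
  constructor.
  - exact Cx_ring.
  - intro H. injection H. lra.
  - reflexivity.
  - intros p Hp. apply Cx_nz in Hp. destruct p as [a b]; simpl in *.
    apply Cx_ext; unfold C1, RtoC, Cmul, Cinv; simpl; field; auto.
Qed.

Add Field Cxfield : Cx_field.

Definition toC (z : Cx) : Complex.C := (Cre z, Cim z).

Lemma Cnorm_toC z : Cnorm z = Complex.Cmod (toC z).
Proof. unfold Cnorm, Complex.Cmod, toC; simpl. f_equal. ring. Qed.

Lemma toC_mul z w : toC (Cmul z w) = Complex.Cmult (toC z) (toC w).
Proof. reflexivity. Qed.
Lemma toC_add z w : toC (Cadd z w) = Complex.Cplus (toC z) (toC w).
Proof. reflexivity. Qed.
Lemma toC_opp z : toC (Copp z) = Complex.Copp (toC z).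
Proof. reflexivity. Qed.
Lemma toC_R r : toC (RtoC r) = Complex.RtoC r.
Proof. reflexivity. Qed.

Lemma Cnorm_mul z w : Cnorm (Cmul z w) = Cnorm z * Cnorm w.
Proof. rewrite !Cnorm_toC, toC_mul. apply Complex.Cmod_mult. Qed.
Lemma Cnorm_add z w : Cnorm (Cadd z w) <= Cnorm z + Cnorm w.
Proof. rewrite !Cnorm_toC, toC_add. apply Complex.Cmod_triangle. Qed.
Lemma Cnorm_ge0 z : 0 <= Cnorm z.
Proof. rewrite Cnorm_toC. apply Complex.Cmod_ge_0. Qed.
Lemma Cnorm_R r : Cnorm (RtoC r) = Rabs r.
Proof. rewrite Cnorm_toC, toC_R. apply Complex.Cmod_R. Qed.
Lemma Cnorm_opp z : Cnorm (Copp z) = Cnorm z.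
Proof. rewrite !Cnorm_toC, toC_opp. apply Complex.Cmod_opp. Qed.
Lemma Cnorm_eq0 z : Cnorm z = 0 -> z = C0.
Proof.
  rewrite Cnorm_toC. intro H. apply Complex.Cmod_eq_0 in H.
  unfold toC in H. injection H; intros. apply Cx_ext; simpl; auto.
Qed.
Lemma Cnorm_pos z : z <> C0 -> 0 < Cnorm z.
Proof.
  intro H. destruct (Cnorm_ge0 z) as [h|h]; auto. symmetry in h. apply Cnorm_eq0 in h. contradiction.
Qed.
Lemma Cnorm_C0 : Cnorm C0 = 0.
Proof. unfold C0. rewrite Cnorm_R. apply Rabs_R0. Qed.
Lemma Cnorm_C1 : Cnorm C1 = 1.
Proof. unfold C1. rewrite Cnorm_R. apply Rabs_R1. Qed.
Lemma Cnorm_sub z w : Cnorm (Csub z w) <= Cnorm z + Cnorm w.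
Proof. unfold Csub. rewrite <- (Cnorm_opp w). apply Cnorm_add. Qed.
Lemma Cnorm_sub_sym z w : Cnorm (Csub z w) = Cnorm (Csub w z).
Proof.
  replace (Csub z w) with (Copp (Csub w z)) by ring. apply Cnorm_opp.
Qed.
Lemma Cnorm_inv z : z <> C0 -> Cnorm (Cinv z) = / Cnorm z.
Proof.
  intro H. assert (0 < Cnorm z) by (apply Cnorm_pos; auto).
  assert (E: Cmul (Cinv z) z = C1) by (field; auto).
  assert (Cnorm (Cinv z) * Cnorm z = 1) by (rewrite <- Cnorm_mul, E; apply Cnorm_C1).
  field_simplify_eq; [|lra]. lra.
Qed.
Lemma Cnorm_tri3 a b c : Cnorm (Csub a c) <= Cnorm (Csub a b) + Cnorm (Csub b c).
Proof. replace (Csub a c) with (Cadd (Csub a b) (Csub b c)) by ring. apply Cnorm_add. Qed.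
Lemma Cre_le z : Rabs (Cre z) <= Cnorm z.
Proof.
  unfold Cnorm. rewrite <- sqrt_Rsqr_abs. apply sqrt_le_1_alt. unfold Rsqr.
  pose proof (Rle_0_sqr (Cim z)). unfold Rsqr in H. lra.
Qed.
Lemma Cim_le z : Rabs (Cim z) <= Cnorm z.
Proof.
  unfold Cnorm. rewrite <- sqrt_Rsqr_abs. apply sqrt_le_1_alt. unfold Rsqr.
  pose proof (Rle_0_sqr (Cre z)). unfold Rsqr in H. lra.
Qed.
Lemma Cnorm_le_parts z : Cnorm z <= Rabs (Cre z) + Rabs (Cim z).
Proof.
  assert (E: z = Cadd (RtoC (Cre z)) (Cmul (RtoC (Cim z)) (mkC 0 1))).
  { apply Cx_ext; simpl; ring. }
  rewrite E at 1.
  eapply Rle_trans. apply Cnorm_add. rewrite Cnorm_mul, !Cnorm_R. simpl.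
  assert (Cnorm (mkC 0 1) = 1). { unfold Cnorm; simpl. replace (0*0+1*1) with 1 by ring. apply sqrt_1. }
  rewrite H. lra.
Qed.

Lemma Cmul_nz z w : z <> C0 -> w <> C0 -> Cmul z w <> C0.
Proof.
  intros Hz Hw H. apply Cnorm_pos in Hz. apply Cnorm_pos in Hw.
  assert (Cnorm (Cmul z w) = 0) by (rewrite H; apply Cnorm_C0).
  rewrite Cnorm_mul in H0. nra.
Qed.

Lemma RtoC_mul a b : RtoC (a * b) = Cmul (RtoC a) (RtoC b).
Proof. apply Cx_ext; simpl; ring. Qed.
Lemma RtoC_add a b : RtoC (a + b) = Cadd (RtoC a) (RtoC b).
Proof. apply Cx_ext; simpl; ring. Qed.
Lemma RtoC_sub a b : RtoC (a - b) = Csub (RtoC a) (RtoC b).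
Proof. apply Cx_ext; simpl; ring. Qed.
Lemma RtoC_inv a : a <> 0 -> RtoC (/ a) = Cinv (RtoC a).
Proof. intro. apply Cx_ext; simpl; field; auto. Qed.
Lemma RtoC_nz a : a <> 0 -> RtoC a <> C0.
Proof. intros H E. injection E. auto. Qed.

Lemma Cpow_add z m n : Cpow z (m + n) = Cmul (Cpow z m) (Cpow z n).
Proof. induction m; simpl. ring. rewrite IHm. ring. Qed.
Lemma Cpow_mul z w n : Cpow (Cmul z w) n = Cmul (Cpow z n) (Cpow w n).
Proof. induction n; simpl. ring. rewrite IHn. ring. Qed.
Lemma Cpow_R r n : Cpow (RtoC r) n = RtoC (r ^ n).
Proof. induction n; simpl. reflexivity. rewrite IHn, RtoC_mul. reflexivity. Qed.
Lemma Cnorm_pow z n : Cnorm (Cpow z n) = Cnorm z ^ n.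
Proof. induction n; simpl. apply Cnorm_C1. rewrite Cnorm_mul, IHn. reflexivity. Qed.

Lemma pow_le1 x n : 0 <= x <= 1 -> x ^ n <= 1.
Proof. intro H. induction n; simpl. lra. pose proof (pow_le x n). nra. Qed.

Lemma pow_decr x m n : 0 <= x <= 1 -> (m <= n)%nat -> x ^ n <= x ^ m.
Proof.
  intros H Hmn. replace n with (m + (n - m))%nat by lia. rewrite pow_add.
  pose proof (pow_le x m (proj1 H)). pose proof (pow_le1 x (n - m) H). nra.
Qed.

Lemma Csum_ext f g n : (forall k, (k < n)%nat -> f k = g k) -> Csum f n = Csum g n.
Proof. induction n; intro H; simpl. auto. rewrite IHn by (intros; apply H; lia). rewrite H by lia. auto. Qed.
Lemma Rsum_ext f g n : (forall k, (k < n)%nat -> f k = g k) -> Rsum f n = Rsum g n.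
Proof. induction n; intro H; simpl. auto. rewrite IHn by (intros; apply H; lia). rewrite H by lia. auto. Qed.
Lemma Rsum_le f g n : (forall k, (k < n)%nat -> f k <= g k) -> Rsum f n <= Rsum g n.
Proof.
  induction n; intro H; simpl. lra.
  assert (Rsum f n <= Rsum g n) by (apply IHn; intros; apply H; lia).
  specialize (H n ltac:(lia)). lra.
Qed.
Lemma Rsum_ge0 f n : (forall k, (k < n)%nat -> 0 <= f k) -> 0 <= Rsum f n.
Proof.
  intro H. replace 0 with (Rsum (fun _ => 0) n). apply Rsum_le; auto.
  induction n; simpl; auto. rewrite IHn. ring. intros; apply H; lia.
Qed.
Lemma Rsum_scal a f n : Rsum (fun k => a * f k) n = a * Rsum f n.
Proof. induction n; simpl. ring. rewrite IHn. ring. Qed.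
Lemma Rsum_add f g n : Rsum (fun k => f k + g k) n = Rsum f n + Rsum g n.
Proof. induction n; simpl. ring. rewrite IHn. ring. Qed.
Lemma Rsum_mono f n m : (forall k, 0 <= f k) -> (n <= m)%nat -> Rsum f n <= Rsum f m.
Proof.
  intros H Hnm. induction Hnm. lra. simpl. specialize (H m). lra.
Qed.

Lemma Rsum_geom r n : 0 <= r < 1 -> Rsum (fun k => r ^ k) n = (1 - r ^ n) / (1 - r).
Proof. intro H. induction n; simpl. field. lra. rewrite IHn. field. lra. Qed.
Lemma Rsum_geom_le r n : 0 <= r < 1 -> Rsum (fun k => r ^ k) n <= / (1 - r).
Proof.
  intro H. rewrite Rsum_geom by auto. pose proof (pow_le r n (proj1 H)).
  unfold Rdiv. rewrite <- (Rmult_1_l (/ (1 - r))) at 2. apply Rmult_le_compat_r. apply Rlt_le, Rinv_0_lt_compat. lra. lra.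
Qed.

Lemma Csum_add f g n : Csum (fun k => Cadd (f k) (g k)) n = Cadd (Csum f n) (Csum g n).
Proof. induction n; simpl. apply Cx_ext; simpl; ring. rewrite IHn. ring. Qed.
Lemma Csum_sub f g n : Csum (fun k => Csub (f k) (g k)) n = Csub (Csum f n) (Csum g n).
Proof. induction n; simpl. apply Cx_ext; simpl; ring. rewrite IHn. ring. Qed.
Lemma Csum_scal a f n : Csum (fun k => Cmul a (f k)) n = Cmul a (Csum f n).
Proof. induction n; simpl. apply Cx_ext; simpl; ring. rewrite IHn. ring. Qed.
Lemma Csum_scal_r a f n : Csum (fun k => Cmul (f k) a) n = Cmul (Csum f n) a.
Proof. induction n; simpl. apply Cx_ext; simpl; ring. rewrite IHn. ring. Qed.
Lemma Csum_first f n : Csum f (S n) = Cadd (f 0%nat) (Csum (fun k => f (S k)) n).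
Proof. induction n; simpl. apply Cx_ext; simpl; ring. simpl in IHn. rewrite IHn. ring. Qed.
Lemma Csum_zero f n : (forall k, (k < n)%nat -> f k = C0) -> Csum f n = C0.
Proof. induction n; intro H; simpl. auto. rewrite IHn, H by (intros; try apply H; lia). ring. Qed.
Lemma Csum_swap (f : nat -> nat -> Cx) n m :
  Csum (fun i => Csum (fun j => f i j) m) n = Csum (fun j => Csum (fun i => f i j) n) m.
Proof.
  induction n; simpl. symmetry; apply Csum_zero; auto.
  rewrite IHn. rewrite <- Csum_add. reflexivity.
Qed.
Lemma Csum_norm f n : Cnorm (Csum f n) <= Rsum (fun k => Cnorm (f k)) n.
Proof.
  induction n; simpl. rewrite Cnorm_C0; lra.
  eapply Rle_trans. apply Cnorm_add. lra.
Qed.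
Lemma Csum_split f m n : Csum f (m + n) = Cadd (Csum f m) (Csum (fun k => f (m + k)%nat) n).
Proof.
  induction n; simpl. rewrite Nat.add_0_r. ring.
  rewrite Nat.add_succ_r. simpl. rewrite IHn. ring.
Qed.
Lemma Cre_sum f n : Cre (Csum f n) = Rsum (fun k => Cre (f k)) n.
Proof. induction n; simpl; auto. rewrite IHn; auto. Qed.

Lemma C_cv_geom u l C r : 0 <= r < 1 -> (forall n, Cnorm (Csub (u n) l) <= C * r ^ n) -> C_cv u l.
Proof.
  intros Hr H eps Heps.
  assert (HC: 0 <= C). { specialize (H O). simpl in H. pose proof (Cnorm_ge0 (Csub (u O) l)). lra. }
  destruct (pow_lt_1_zero r ltac:(rewrite Rabs_pos_eq; lra) (eps / (C + 1))) as [N HN].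
  { apply Rdiv_lt_0_compat; lra. }
  exists N. intros n Hn. specialize (HN n Hn). rewrite Rabs_pos_eq in HN by (apply pow_le; lra).
  eapply Rle_lt_trans. apply H.
  apply Rle_lt_trans with ((C+1) * r ^ n). pose proof (pow_le r n (proj1 Hr)). nra.
  apply Rmult_lt_compat_l with (r := C + 1) in HN. 2: lra.
  replace ((C + 1) * (eps / (C + 1))) with eps in HN by (field; lra). lra.
Qed.

Lemma geom_cauchy_aux u C r : 0 <= r < 1 -> 0 <= C ->
  (forall n, Cnorm (Csub (u (S n)) (u n)) <= C * r ^ n) ->
  forall n k, Cnorm (Csub (u (n + k)%nat) (u n)) <= C * r ^ n / (1 - r).
Proof.
  intros Hr HC H n k.
  assert (Cnorm (Csub (u (n + k)%nat) (u n)) <= C * r ^ n * Rsum (fun i => r ^ i) k).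
  { induction k; simpl. rewrite Nat.add_0_r. replace (Csub (u n) (u n)) with C0 by ring.
    rewrite Cnorm_C0. lra.
    rewrite Nat.add_succ_r. eapply Rle_trans. apply (Cnorm_tri3 _ (u (n + k)%nat)).
    specialize (H (n + k)%nat). rewrite pow_add in H. lra. }
  eapply Rle_trans. apply H0. unfold Rdiv. apply Rmult_le_compat_l.
  pose proof (pow_le r n (proj1 Hr)). nra. apply Rsum_geom_le; auto.
Qed.

Lemma geom_limit u C r : 0 <= r < 1 -> 0 <= C ->
  (forall n, Cnorm (Csub (u (S n)) (u n)) <= C * r ^ n) ->
  exists l, forall n, Cnorm (Csub (u n) l) <= C * r ^ n / (1 - r).
Proof.
  intros Hr HC H.
  pose proof (geom_cauchy_aux u C r Hr HC H) as G.
  assert (G2: forall n m, (n >= m)%nat -> Cnorm (Csub (u n) (u m)) <= C * r ^ m / (1 - r)).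
  { intros n m Hnm. replace n with (m + (n - m))%nat by lia. apply G. }
  assert (Hsmall: forall eps, eps > 0 -> exists N, forall n m, (n >= N)%nat -> (m >= N)%nat ->
     Cnorm (Csub (u n) (u m)) < eps).
  { intros eps Heps.
    destruct (pow_lt_1_zero r ltac:(rewrite Rabs_pos_eq; lra) (eps * (1 - r) / (2 * C + 1))) as [N HN].
    { apply Rdiv_lt_0_compat; nra. }
    exists N. intros n m Hn Hm. specialize (HN N (le_n _)). rewrite Rabs_pos_eq in HN by (apply pow_le; lra).
    eapply Rle_lt_trans. apply (Cnorm_tri3 _ (u N)). rewrite (Cnorm_sub_sym (u N)).
    pose proof (G2 n N Hn). pose proof (G2 m N Hm).
    assert (C * r ^ N / (1 - r) < eps / 2 + 0).
    { apply Rmult_lt_compat_l with (r := 2 * C + 1) in HN; [|lra].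
      replace ((2 * C + 1) * (eps * (1 - r) / (2 * C + 1))) with (eps * (1 - r)) in HN by (field; lra).
      assert (C * r ^ N * 2 <= (2 * C + 1) * r ^ N). pose proof (pow_le r N (proj1 Hr)). nra.
      apply Rmult_lt_reg_r with (1 - r). lra. unfold Rdiv. rewrite Rmult_assoc, Rinv_l by lra. nra. }
    lra. }
  assert (CR: Cauchy_crit (fun n => Cre (u n))).
  { intros eps Heps. destruct (Hsmall eps Heps) as [N HN]. exists N. intros n m Hn Hm.
    unfold Rdist. eapply Rle_lt_trans. 2: apply (HN n m Hn Hm).
    replace (Cre (u n) - Cre (u m)) with (Cre (Csub (u n) (u m))) by (simpl; ring). apply Cre_le. }
  assert (CI: Cauchy_crit (fun n => Cim (u n))).
  { intros eps Heps. destruct (Hsmall eps Heps) as [N HN]. exists N. intros n m Hn Hm.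
    unfold Rdist. eapply Rle_lt_trans. 2: apply (HN n m Hn Hm).
    replace (Cim (u n) - Cim (u m)) with (Cim (Csub (u n) (u m))) by (simpl; ring). apply Cim_le. }
  destruct (R_complete _ CR) as [lr Hlr]. destruct (R_complete _ CI) as [li Hli].
  exists (mkC lr li). intro n. apply Rle_plus_epsilon. intros eps Heps.
  destruct (Hlr (eps/2) ltac:(lra)) as [N1 H1]. destruct (Hli (eps/2) ltac:(lra)) as [N2 H2].
  set (m := (n + N1 + N2)%nat).
  specialize (H1 m ltac:(unfold m; lia)). specialize (H2 m ltac:(unfold m; lia)).
  unfold Rdist in H1, H2.
  eapply Rle_trans. apply (Cnorm_tri3 _ (u m)). rewrite (Cnorm_sub_sym (u n)).
  pose proof (G2 m n ltac:(unfold m; lia)).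
  pose proof (Cnorm_le_parts (Csub (u m) (mkC lr li))). simpl in H3.
  replace (Cre (u m) + - lr) with (Cre (u m) - lr) in H3 by ring.
  replace (Cim (u m) + - li) with (Cim (u m) - li) in H3 by ring. lra.
Qed.

Lemma geom_small C r eps : 0 <= r < 1 -> 0 < eps -> exists n, C * r ^ n < eps.
Proof.
  intros Hr He.
  destruct (pow_lt_1_zero r ltac:(rewrite Rabs_pos_eq; lra) (eps / (Rabs C + 1))) as [N HN].
  { apply Rdiv_lt_0_compat; try lra. pose proof (Rabs_pos C); lra. }
  exists N. specialize (HN N (le_n _)). rewrite Rabs_pos_eq in HN by (apply pow_le; lra).
  pose proof (Rabs_pos C). pose proof (Rle_abs C). pose proof (pow_le r N (proj1 Hr)).
  apply Rmult_lt_compat_l with (r := Rabs C + 1) in HN; [|lra].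
  replace ((Rabs C + 1) * (eps / (Rabs C + 1))) with eps in HN by (field; lra). nra.
Qed.

Lemma Cnorm_1sub z : 1 - Cnorm z <= Cnorm (Csub C1 z).
Proof.
  pose proof (Cnorm_tri3 C1 (Csub C1 z) C0). 
  replace (Csub C1 C0) with C1 in H by ring. replace (Csub (Csub C1 z) C0) with (Csub C1 z) in H by ring.
  replace (Csub C1 (Csub C1 z)) with z in H by ring. rewrite Cnorm_C1 in H. lra.
Qed.
Lemma Cnorm_1add z : Cnorm (Csub C1 z) <= 1 + Cnorm z.
Proof. pose proof (Cnorm_sub C1 z). rewrite Cnorm_C1 in H. lra. Qed.

Lemma qpoch_S a q n : qpoch a q (S n) = Cmul (qpoch a q n) (Csub C1 (Cmul a (RtoC (q ^ n)))).
Proof. reflexivity. Qed.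
Lemma qpoch_0 a q : qpoch a q 0 = C1.
Proof. reflexivity. Qed.

Lemma qpoch_add a q m n : qpoch a q (m + n) = Cmul (qpoch a q m) (qpoch (Cmul a (RtoC (q ^ m))) q n).
Proof.
  induction n. rewrite Nat.add_0_r, qpoch_0. ring.
  rewrite Nat.add_succ_r, !qpoch_S, IHn. rewrite pow_add, RtoC_mul. ring.
Qed.

Lemma qpoch_S_left a q n : qpoch a q (S n) = Cmul (Csub C1 a) (qpoch (Cmul a (RtoC q)) q n).
Proof.
  change (S n) with (1 + n)%nat. rewrite qpoch_add, qpoch_S, qpoch_0.
  replace (q ^ 1) with q by ring. replace (q ^ 0) with 1 by ring. f_equal.
  replace (RtoC 1) with C1 by reflexivity. ring.
Qed.

Lemma qpoch_nz a q n : (forall j, Csub C1 (Cmul a (RtoC (q ^ j))) <> C0) -> qpoch a q n <> C0.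
Proof.
  intro H. induction n. rewrite qpoch_0. intro E; injection E; lra.
  rewrite qpoch_S. apply Cmul_nz; auto.
Qed.

Lemma exp_ge1 x : 0 <= x -> 1 + x <= exp x.
Proof. intro H. destruct (Req_dec x 0). subst. rewrite exp_0. lra. left. apply exp_ineq1; auto. Qed.

Lemma exp_le x y : x <= y -> exp x <= exp y.
Proof. intros [H|H]. left; apply exp_increasing; auto. subst; lra. Qed.

Lemma qpoch_upper a q n : 0 < q < 1 -> Cnorm (qpoch a q n) <= exp (Cnorm a / (1 - q)).
Proof.
  intro Hq.
  assert (Cnorm (qpoch a q n) <= exp (Cnorm a * Rsum (fun j => q ^ j) n)).
  { induction n. rewrite qpoch_0; cbn [Rsum]. rewrite Cnorm_C1, Rmult_0_r, exp_0. lra.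
    rewrite qpoch_S; cbn [Rsum]. rewrite Cnorm_mul. rewrite Rmult_plus_distr_l, exp_plus.
    pose proof (Cnorm_1add (Cmul a (RtoC (q ^ n)))). rewrite Cnorm_mul, Cnorm_R in H.
    rewrite Rabs_pos_eq in H by (apply pow_le; lra).
    pose proof (exp_ge1 (Cnorm a * q ^ n)). 
    assert (0 <= Cnorm a * q ^ n) by (apply Rmult_le_pos; [apply Cnorm_ge0 | apply pow_le; lra]).
    specialize (H0 H1). apply Rmult_le_compat; try apply Cnorm_ge0; lra. }
  eapply Rle_trans. apply H. apply exp_le. unfold Rdiv.
  apply Rmult_le_compat_l. apply Cnorm_ge0. apply Rsum_geom_le. lra.
Qed.

Lemma qpoch_lower_small b q n : 0 < q < 1 -> Cnorm b <= 1 ->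
  1 - Cnorm b * Rsum (fun j => q ^ j) n <= Cnorm (qpoch b q n).
Proof.
  intros Hq Hb. induction n. rewrite qpoch_0; cbn [Rsum]. rewrite Cnorm_C1. lra.
  rewrite qpoch_S; cbn [Rsum]. rewrite Cnorm_mul. pose proof (Cnorm_1sub (Cmul b (RtoC (q ^ n)))).
  rewrite Cnorm_mul, Cnorm_R, Rabs_pos_eq in H by (apply pow_le; lra).
  assert (q ^ n <= 1) by (apply pow_le1; lra). pose proof (pow_le q n ltac:(lra)).
  pose proof (Cnorm_ge0 b). pose proof (Cnorm_ge0 (qpoch b q n)).
  assert (0 <= Rsum (fun j => q ^ j) n) by (apply Rsum_ge0; intros; apply pow_le; lra).
  rewrite Rmult_plus_distr_l.
  set (S := Rsum (fun j => q ^ j) n) in *. set (Y := Cnorm (Csub C1 (Cmul b (RtoC (q ^ n))))) in *.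
  set (X := Cnorm (qpoch b q n)) in *. set (B := Cnorm b) in *. set (Q := q ^ n) in *.
  assert (0 <= B * Q) by (apply Rmult_le_pos; lra).
  assert (0 <= Y) by apply Cnorm_ge0.
  assert (0 <= B * S) by (apply Rmult_le_pos; lra).
  destruct (Rle_dec (1 - B * S) 0).
  - assert (0 <= X * Y) by (apply Rmult_le_pos; lra). lra.
  - assert (1 - B * Q >= 0) by nra.
    assert ((1 - B * S) * (1 - B * Q) <= X * Y) by (apply Rmult_le_compat; lra).
    nra.
Qed.

Lemma qpoch_lower a q : 0 < q < 1 -> (forall j, Csub C1 (Cmul a (RtoC (q ^ j))) <> C0) ->
  exists delta, 0 < delta /\ forall n, delta <= Cnorm (qpoch a q n).
Proof.
  intros Hq Hnz.
  destruct (geom_small (Cnorm a) q ((1 - q) / 2) ltac:(lra) ltac:(lra)) as [K HK].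
  assert (Hsm: forall n, 1/2 <= Cnorm (qpoch (Cmul a (RtoC (q ^ K))) q n)).
  { intro n. eapply Rle_trans. 2: apply qpoch_lower_small; auto.
    2: { rewrite Cnorm_mul, Cnorm_R, Rabs_pos_eq by (apply pow_le; lra). lra. }
    rewrite Cnorm_mul, Cnorm_R, Rabs_pos_eq by (apply pow_le; lra).
    pose proof (Rsum_geom_le q n ltac:(lra)).
    assert (0 <= Cnorm a * q ^ K) by (apply Rmult_le_pos; [apply Cnorm_ge0|apply pow_le; lra]).
    assert (Cnorm a * q ^ K * Rsum (fun j => q ^ j) n <= (1 - q) / 2 * / (1 - q)).
    { apply Rmult_le_compat; try lra. apply Rsum_ge0; intros; apply pow_le; lra. }
    replace ((1 - q) / 2 * / (1 - q)) with (1/2) in H1 by (field; lra). lra. }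
  assert (Hfin: forall K0, exists d, 0 < d /\ forall n, (n <= K0)%nat -> d <= Cnorm (qpoch a q n)).
  { induction K0.
    - exists 1. split. lra. intros n Hn. replace n with O by lia. rewrite qpoch_0, Cnorm_C1. lra.
    - destruct IHK0 as [d [Hd Hn]].
      pose proof (Cnorm_pos _ (qpoch_nz a q (S K0) Hnz)).
      exists (Rmin d (Cnorm (qpoch a q (S K0)))). split. apply Rmin_pos; auto.
      intros n Hn'. destruct (Nat.eq_dec n (S K0)). subst. apply Rmin_r.
      eapply Rle_trans. apply Rmin_l. apply Hn. lia. }
  destruct (Hfin K) as [d [Hd Hdn]].
  exists (d / 2). split. lra. intro n.
  destruct (Compare_dec.le_lt_dec n K). specialize (Hdn n l). lra.
  replace n with (K + (n - K))%nat by lia. rewrite qpoch_add, Cnorm_mul.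
  specialize (Hdn K (le_n _)). specialize (Hsm (n - K)%nat).
  apply Rle_trans with (d * (1/2)). lra. apply Rmult_le_compat; lra.
Qed.

Lemma qpoch_limit a q : 0 < q < 1 ->
  exists P C, 0 <= C /\ forall n, Cnorm (Csub (qpoch a q n) P) <= C * q ^ n.
Proof.
  intro Hq. set (M := exp (Cnorm a / (1 - q))).
  assert (HM: 0 <= M) by (unfold M; left; apply exp_pos).
  destruct (geom_limit (qpoch a q) (M * Cnorm a) q ltac:(lra)) as [P HP].
  { apply Rmult_le_pos; auto. apply Cnorm_ge0. }
  { intro n. rewrite qpoch_S.
    replace (Csub (Cmul (qpoch a q n) (Csub C1 (Cmul a (RtoC (q ^ n))))) (qpoch a q n))
      with (Copp (Cmul (qpoch a q n) (Cmul a (RtoC (q ^ n))))) by ring.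
    rewrite Cnorm_opp, !Cnorm_mul, Cnorm_R, Rabs_pos_eq by (apply pow_le; lra).
    pose proof (qpoch_upper a q n Hq). fold M in H.
    rewrite <- Rmult_assoc. apply Rmult_le_compat_r. apply pow_le; lra.
    apply Rmult_le_compat_r. apply Cnorm_ge0. auto. }
  exists P, (M * Cnorm a / (1 - q)). split.
  apply Rmult_le_pos. apply Rmult_le_pos; auto. apply Cnorm_ge0. apply Rlt_le, Rinv_0_lt_compat; lra.
  intro n. specialize (HP n). replace (M * Cnorm a / (1 - q) * q ^ n) with (M * Cnorm a * q ^ n / (1 - q)) by (field; lra). auto.
Qed.

Lemma limit_lower u P C r delta : 0 <= r < 1 ->
  (forall n, Cnorm (Csub (u n) P) <= C * r ^ n) -> (forall n, delta <= Cnorm (u n)) -> delta <= Cnorm P.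
Proof.
  intros Hr HP Hd. apply Rle_plus_epsilon. intros eps He.
  destruct (geom_small C r eps Hr He) as [n Hn]. specialize (HP n). specialize (Hd n).
  pose proof (Cnorm_tri3 (u n) P C0). replace (Csub (u n) C0) with (u n) in H by ring.
  replace (Csub P C0) with P in H by ring. lra.
Qed.

Lemma Cinv_diff u v delta : 0 < delta -> delta <= Cnorm u -> delta <= Cnorm v ->
  Cnorm (Csub (Cinv u) (Cinv v)) <= Cnorm (Csub u v) / (delta * delta).
Proof.
  intros Hd Hu Hv.
  assert (u <> C0). { intro E; subst; rewrite Cnorm_C0 in Hu; lra. }
  assert (v <> C0). { intro E; subst; rewrite Cnorm_C0 in Hv; lra. }
  replace (Csub (Cinv u) (Cinv v)) with (Cmul (Csub v u) (Cmul (Cinv u) (Cinv v))) by (field; auto).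
  rewrite !Cnorm_mul, !Cnorm_inv, Cnorm_sub_sym by auto.
  unfold Rdiv. apply Rmult_le_compat_l. apply Cnorm_ge0.
  rewrite Rinv_mult. apply Rmult_le_compat; try (apply Rlt_le, Rinv_0_lt_compat; lra);
  apply Rinv_le_contravar; lra.
Qed.

Lemma G1 q Y : 0 < q < 1 -> 0 <= Y -> exists M, forall a, q ^ (a * a) * Y ^ a <= M.
Proof.
  intros Hq HY. destruct (geom_small Y q 1 ltac:(lra) ltac:(lra)) as [K HK].
  exists ((1 + Y) ^ K). intro a.
  assert (1 <= (1 + Y) ^ K). { replace 1 with (1 ^ K) at 1 by apply pow1. apply pow_incr. lra. }
  destruct (Compare_dec.le_lt_dec K a).
  - rewrite pow_mult, <- Rpow_mult_distr.
    assert (q ^ a * Y <= 1). { pose proof (pow_decr q K a ltac:(lra) l). nra. }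
    assert (0 <= q ^ a * Y) by (apply Rmult_le_pos; auto; apply pow_le; lra).
    pose proof (pow_le1 (q ^ a * Y) a ltac:(lra)). lra.
  - assert (q ^ (a * a) <= 1) by (apply pow_le1; lra).
    assert (Y ^ a <= (1 + Y) ^ a) by (apply pow_incr; lra).
    assert ((1 + Y) ^ a <= (1 + Y) ^ K) by (apply Rle_pow; lia || lra).
    pose proof (pow_le Y a HY). pose proof (pow_le q (a * a) ltac:(lra)). nra.
Qed.

Fixpoint qR (q : R) (n : nat) : R :=
  match n with O => 1 | S k => qR q k * (1 - q * q ^ k) end.

Lemma qR_pos q n : 0 < q < 1 -> 0 < qR q n.
Proof.
  intro Hq. induction n; simpl. lra. apply Rmult_lt_0_compat; auto.
  pose proof (pow_le1 q n ltac:(lra)). pose proof (pow_le q n ltac:(lra)). nra.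
Qed.

Lemma qpoch_qR q n : qpoch (RtoC q) q n = RtoC (qR q n).
Proof.
  induction n. reflexivity. rewrite qpoch_S, IHn. simpl qR.
  apply Cx_ext; simpl; ring.
Qed.

Definition PR (q : R) (N a : nat) : R :=
  if Nat.leb a N then qR q N / (qR q a * qR q (N - a)) else 0.

Lemma PR_0 q N : 0 < q < 1 -> PR q N 0 = 1.
Proof. intro Hq. unfold PR. simpl. rewrite Nat.sub_0_r. pose proof (qR_pos q N Hq). field. lra. Qed.
Lemma PR_out q N a : (N < a)%nat -> PR q N a = 0.
Proof. intro H. unfold PR. destruct (Nat.leb_spec a N). lia. auto. Qed.

Lemma PR_pascal q N a : 0 < q < 1 ->
  PR q (S N) (S a) = PR q N (S a) + q ^ (N - a) * PR q N a.
Proof.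
  intro Hq. destruct (Compare_dec.lt_eq_lt_dec a N) as [[Hlt|Heq]|Hgt].
  - replace N with (a + S (N - a - 1))%nat by lia. set (k := (N - a - 1)%nat).
    unfold PR.
    replace (Nat.leb (S a) (S (a + S k))) with true by (symmetry; apply Nat.leb_le; lia).
    replace (Nat.leb (S a) (a + S k)) with true by (symmetry; apply Nat.leb_le; lia).
    replace (Nat.leb a (a + S k)) with true by (symmetry; apply Nat.leb_le; lia).
    replace (S (a + S k) - S a)%nat with (S k) by lia.
    replace (a + S k - S a)%nat with k by lia.
    replace (a + S k - a)%nat with (S k) by lia.
    replace (S (a + S k)) with (S (S (a + k))) by lia.
    replace (a + S k)%nat with (S (a + k)) by lia.
    simpl qR.
    pose proof (qR_pos q (a + k) Hq). pose proof (qR_pos q a Hq). pose proof (qR_pos q k Hq).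
    assert (q * q ^ a < 1). { pose proof (pow_le1 q a ltac:(lra)). nra. }
    assert (q * q ^ k < 1). { pose proof (pow_le1 q k ltac:(lra)). nra. }
    assert (q * (q * q ^ (a + k)) = (q * q ^ a) * (q * q ^ k)) by (rewrite pow_add; ring).
    rewrite H4. simpl. field. repeat split; nra.
  - subst. unfold PR. rewrite (proj2 (Nat.leb_le _ _) (le_n _)), Nat.leb_refl.
    replace (Nat.leb (S N) N) with false by (symmetry; apply Nat.leb_gt; lia).
    rewrite !Nat.sub_diag. simpl. pose proof (qR_pos q N Hq). field. split; [lra|]. pose proof (pow_le1 q N ltac:(lra)). nra.
  - rewrite !PR_out by lia. ring.
Qed.

Definition tD (q : R) (y : Cx) (a : nat) : Cx :=
  Cdiv (Cmul (RtoC (q ^ (a * a))) (Cpow y a)) (qpoch (Cmul y (RtoC q)) q a).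

Lemma nz_right x y : Cmul x y <> C0 -> y <> C0.
Proof. intros H E. apply H. subst. ring. Qed.

Lemma durfee q N : 0 < q < 1 -> forall y, (forall n, qpoch (Cmul y (RtoC q)) q n <> C0) ->
  Csum (fun a => Cmul (tD q y a) (RtoC (PR q N a))) (S N) = Cinv (qpoch (Cmul y (RtoC q)) q N).
Proof.
  intro Hq. induction N; intros y Hy.
  - simpl. rewrite PR_0 by auto. unfold tD. simpl. rewrite qpoch_0. change (RtoC 1) with C1. field. intro E; injection E; lra.
  - rewrite Csum_first. rewrite PR_0 by auto.
    rewrite (Csum_ext _ (fun a => Cadd (Cmul (tD q y (S a)) (RtoC (PR q N (S a))))
                 (Cmul (Cmul (Cmul y (RtoC (q ^ (S N)))) (Cinv (Csub C1 (Cmul y (RtoC q)))))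
                       (Cmul (tD q (Cmul y (RtoC q)) a) (RtoC (PR q N a)))))).
    2:{ intros a Ha. rewrite PR_pascal by auto. rewrite RtoC_add, RtoC_mul.
        unfold tD. rewrite (qpoch_S_left (Cmul y (RtoC q))).
        assert (Hz := Hy (S a)). rewrite qpoch_S_left in Hz.
        pose proof (nz_right _ _ Hz). assert (Csub C1 (Cmul y (RtoC q)) <> C0).
        { intro E. apply Hz. rewrite E. ring. }
        rewrite Cpow_mul, Cpow_R. change (Cpow y (S a)) with (Cmul y (Cpow y a)).
        assert (E: q ^ (S a * S a) * q ^ (N - a) = q ^ (a * a) * q ^ a * q ^ (S N)).
        { rewrite <- !pow_add. f_equal. nia. }
        assert (RtoC (q ^ (N - a)) = Cmul (RtoC (q ^ (a * a) * q ^ a * q ^ (S N))) (Cinv (RtoC (q ^ (S a * S a))))).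
        { rewrite <- E. rewrite !RtoC_mul. field. apply RtoC_nz. apply pow_nonzero. lra. }
        rewrite H1. rewrite !RtoC_mul. field. repeat split; try assumption. apply RtoC_nz, pow_nonzero; lra. }
    rewrite Csum_add, Csum_scal.
    assert (E1: Cadd (Cmul (tD q y 0) (RtoC 1)) (Csum (fun a => Cmul (tD q y (S a)) (RtoC (PR q N (S a)))) (S N))
              = Csum (fun a => Cmul (tD q y a) (RtoC (PR q N a))) (S N)).
    { rewrite <- (PR_0 q N Hq) at 1.
      rewrite <- (Csum_first (fun a => Cmul (tD q y a) (RtoC (PR q N a))) (S N)).
      change (Csum (fun a => Cmul (tD q y a) (RtoC (PR q N a))) (S (S N))) with
        (Cadd (Csum (fun a => Cmul (tD q y a) (RtoC (PR q N a))) (S N)) (Cmul (tD q y (S N)) (RtoC (PR q N (S N))))).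
      rewrite PR_out by lia. replace (RtoC 0) with C0 by reflexivity. ring. }
    assert (Hy2: forall n, qpoch (Cmul (Cmul y (RtoC q)) (RtoC q)) q n <> C0).
    { intro n. pose proof (Hy (S n)). rewrite qpoch_S_left in H. apply (nz_right _ _ H). }
    match goal with |- Cadd ?A (Cadd ?B ?C) = _ => replace (Cadd A (Cadd B C)) with (Cadd (Cadd A B) C) by ring end.
    rewrite E1, (IHN y Hy), (IHN _ Hy2).
    pose proof (qpoch_S (Cmul y (RtoC q)) q N) as R1.
    pose proof (qpoch_S_left (Cmul y (RtoC q)) q N) as R2.
    pose proof (Hy (S N)) as HSN.
    rewrite R2 in HSN. pose proof (nz_right _ _ HSN) as HB.
    assert (HF: Csub C1 (Cmul y (RtoC q)) <> C0) by (intro E; apply HSN; rewrite E; ring).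
    pose proof (Hy (S N)) as HSN'. rewrite R1 in HSN'. pose proof (nz_right _ _ HSN') as HE.
    assert (HA := Hy N).
    rewrite R2 in R1. rewrite R2.
    set (A := qpoch (Cmul y (RtoC q)) q N) in *.
    set (B := qpoch (Cmul (Cmul y (RtoC q)) (RtoC q)) q N) in *.
    idtac.
    replace B with (Cdiv (Cmul A (Csub C1 (Cmul (Cmul y (RtoC q)) (RtoC (q ^ N))))) (Csub C1 (Cmul y (RtoC q)))) by (rewrite <- R1; field; auto).
    change (q ^ S N) with (q * q ^ N). rewrite RtoC_mul.
    field. repeat split; auto.
Qed.

Definition XX (q : R) (x : Cx) (j a : nat) : Cx :=
  Cdiv (Cmul (RtoC (q ^ (a * a + j * a))) (Cpow x a))
       (Cmul (qpoch (RtoC q) q a) (qpoch (Cmul x (RtoC q)) q (j + a))).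

Lemma qpoch_real_near1 s q n : 0 < q < 1 -> 0 <= s <= 1 ->
  Cnorm (Csub (qpoch (RtoC s) q n) C1) <= s * Rsum (fun j => q ^ j) n.
Proof.
  intros Hq [Hs0 Hs1]. induction n. rewrite qpoch_0. replace (Csub C1 C1) with C0 by ring. rewrite Cnorm_C0. simpl. lra.
  rewrite qpoch_S. cbn [Rsum].
  replace (Csub (Cmul (qpoch (RtoC s) q n) (Csub C1 (Cmul (RtoC s) (RtoC (q ^ n))))) C1)
    with (Csub (Cmul (Csub (qpoch (RtoC s) q n) C1) (RtoC (1 - s * q ^ n))) (RtoC (s * q ^ n)))
    by (apply Cx_ext; simpl; ring).
  eapply Rle_trans. apply Cnorm_sub. rewrite Cnorm_mul, !Cnorm_R.
  pose proof (pow_le1 q n ltac:(lra)). pose proof (pow_le q n ltac:(lra)).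
  rewrite (Rabs_pos_eq (s * q ^ n)) by nra. rewrite Rabs_pos_eq by nra.
  pose proof (Cnorm_ge0 (Csub (qpoch (RtoC s) q n) C1)).
  assert (0 <= s * q ^ n) by nra. set (w := s * q ^ n) in *. set (Nn := Cnorm (Csub (qpoch (RtoC s) q n) C1)) in *.
  assert (Nn * (1 - w) <= Nn) by nra.
  unfold w. rewrite Rmult_plus_distr_l. fold w. lra.
Qed.

Lemma rho_eq q N a : 0 < q < 1 -> (a <= N)%nat ->
  Cmul (RtoC (PR q N a)) (qpoch (RtoC q) q a) = qpoch (RtoC (q * q ^ (N - a))) q a.
Proof.
  intros Hq Ha. unfold PR. rewrite (proj2 (Nat.leb_le _ _) Ha).
  pose proof (qpoch_add (RtoC q) q (N - a) a). replace (N - a + a)%nat with N in H by lia.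
  rewrite !qpoch_qR in *. rewrite <- RtoC_mul in H.
  pose proof (qR_pos q N Hq). pose proof (qR_pos q a Hq). pose proof (qR_pos q (N - a) Hq).
  assert (qpoch (RtoC (q * q ^ (N - a))) q a = Cdiv (RtoC (qR q N)) (RtoC (qR q (N - a)))).
  { rewrite H. field. apply RtoC_nz. lra. }
  rewrite H3. unfold Rdiv. rewrite !RtoC_mul, RtoC_inv, RtoC_mul by nra. field.
  split; apply RtoC_nz; lra.
Qed.

Lemma tannery_id q x j N : 0 < q < 1 ->
  (forall i, Csub C1 (Cmul (Cmul x (RtoC q)) (RtoC (q ^ i))) <> C0) ->
  Csum (fun a => Cmul (XX q x j a) (Cmul (RtoC (PR q N a)) (qpoch (RtoC q) q a))) (S N)
  = Cinv (qpoch (Cmul x (RtoC q)) q (j + N)).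
Proof.
  intros Hq Hb. set (b := Cmul x (RtoC q)) in *.
  set (y := Cmul x (RtoC (q ^ j))).
  assert (Eyb: Cmul y (RtoC q) = Cmul b (RtoC (q ^ j))) by (unfold y, b; ring).
  assert (Hy: forall n, qpoch (Cmul y (RtoC q)) q n <> C0).
  { intro n. rewrite Eyb. intro E. apply (qpoch_nz b q (j + n) Hb). rewrite qpoch_add, E. ring. }
  assert (HQj: qpoch b q j <> C0) by (apply qpoch_nz; auto).
  assert (HQa: forall a, qpoch (RtoC q) q a <> C0).
  { intro a. rewrite qpoch_qR. apply RtoC_nz. pose proof (qR_pos q a Hq). lra. }
  rewrite (Csum_ext _ (fun a => Cmul (Cinv (qpoch b q j)) (Cmul (tD q y a) (RtoC (PR q N a))))).
  2:{ intros a Ha. unfold XX, tD. fold b. rewrite qpoch_add, <- Eyb.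
      unfold y. rewrite Cpow_mul, Cpow_R, pow_add, RtoC_mul.
      rewrite (pow_mult q j a). pose proof (Hy a) as Hya. unfold y in Hya. clearbody y b. field. repeat split; auto. }
  rewrite Csum_scal, durfee by auto. rewrite qpoch_add, <- Eyb. field. split; auto.
Qed.

Lemma Rdiv_le_0_compat a b : 0 <= a -> 0 < b -> 0 <= a / b.
Proof. intros. unfold Rdiv. apply Rmult_le_pos; auto. apply Rlt_le, Rinv_0_lt_compat; auto. Qed.

Lemma Cnorm_div z w : w <> C0 -> Cnorm (Cdiv z w) = Cnorm z / Cnorm w.
Proof. intro H. unfold Cdiv. rewrite Cnorm_mul, Cnorm_inv by auto. reflexivity. Qed.

Lemma qq_lower q : 0 < q < 1 -> exists d, 0 < d /\ forall n, d <= Cnorm (qpoch (RtoC q) q n).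
Proof.
  intro Hq. apply qpoch_lower; auto. intro j. rewrite <- RtoC_mul.
  replace C1 with (RtoC 1) by reflexivity. rewrite <- RtoC_sub. apply RtoC_nz.
  pose proof (pow_le1 q j ltac:(lra)). pose proof (pow_le q j ltac:(lra)). nra.
Qed.

Lemma G1r q Y r : 0 < q < 1 -> 0 <= Y -> 0 < r -> exists M, 0 <= M /\ forall a, q ^ (a * a) * Y ^ a <= M * r ^ a.
Proof.
  intros Hq HY Hr. destruct (G1 q (Y / r) Hq) as [M HM]. apply Rdiv_le_0_compat; lra.
  exists M. split. specialize (HM O). simpl in HM. lra.
  intro a. specialize (HM a). unfold Rdiv in HM. rewrite Rpow_mult_distr, pow_inv in HM.
  assert (0 < r ^ a) by (apply pow_lt; lra).
  apply Rmult_le_compat_r with (r := r ^ a) in HM; [|lra].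
  rewrite !Rmult_assoc, Rinv_l in HM by lra. lra.
Qed.

Lemma XX_bound q x r : 0 < q < 1 -> 0 < r ->
  (forall i, Csub C1 (Cmul (Cmul x (RtoC q)) (RtoC (q ^ i))) <> C0) ->
  exists CX, 0 <= CX /\ forall j a, Cnorm (XX q x j a) <= CX * r ^ a.
Proof.
  intros Hq Hr Hb.
  destruct (qq_lower q Hq) as [dq [Hdq Hdqn]].
  destruct (qpoch_lower _ q Hq Hb) as [db [Hdb Hdbn]].
  destruct (G1r q (Cnorm x) r Hq (Cnorm_ge0 x) Hr) as [M [HM0 HM]].
  exists (M / (dq * db)). split. apply Rdiv_le_0_compat; nra.
  intros j a. unfold XX. rewrite Cnorm_div.
  2:{ apply Cmul_nz; intro E; [specialize (Hdqn a) | specialize (Hdbn (j + a)%nat)]; rewrite E, Cnorm_C0 in *; lra. }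
  rewrite !Cnorm_mul, Cnorm_R, Cnorm_pow, Rabs_pos_eq by (apply pow_le; lra).
  specialize (Hdqn a). specialize (Hdbn (j + a)%nat). specialize (HM a).
  rewrite pow_add. assert (q ^ (j * a) <= 1) by (apply pow_le1; lra).
  pose proof (pow_le q (j * a) ltac:(lra)). pose proof (pow_le q (a * a) ltac:(lra)).
  pose proof (pow_le (Cnorm x) a (Cnorm_ge0 x)).
  assert (q ^ (a * a) * q ^ (j * a) * Cnorm x ^ a <= M * r ^ a).
  { apply Rle_trans with (q ^ (a * a) * Cnorm x ^ a); auto.
    replace (q ^ (a * a) * q ^ (j * a) * Cnorm x ^ a) with ((q ^ (a * a) * Cnorm x ^ a) * q ^ (j * a)) by ring.
    assert (0 <= q ^ (a * a) * Cnorm x ^ a) by nra. nra. }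
  set (U := Cnorm (qpoch (RtoC q) q a)) in *. set (V := Cnorm (qpoch (Cmul x (RtoC q)) q (j + a))) in *.
  unfold Rdiv. replace (M * / (dq * db) * r ^ a) with ((M * r ^ a) * / (dq * db)) by ring.
  apply Rmult_le_compat; auto. apply Rmult_le_pos; auto. apply Rmult_le_pos; auto. apply Rlt_le, Rinv_0_lt_compat; nra.
  apply Rinv_le_contravar; nra.
Qed.

Lemma X_tail q x : 0 < q < 1 ->
  (forall i, Csub C1 (Cmul (Cmul x (RtoC q)) (RtoC (q ^ i))) <> C0) ->
  exists Pb Cp K3, Pb <> C0 /\ 0 <= Cp /\ 0 <= K3 /\
    (forall n, Cnorm (Csub (qpoch (Cmul x (RtoC q)) q n) Pb) <= Cp * q ^ n) /\
    (forall j K, Cnorm (Csub (Csum (XX q x j) K) (Cinv Pb)) <= K3 * q ^ K).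
Proof.
  intros Hq Hb. set (b := Cmul x (RtoC q)) in *.
  destruct (qpoch_limit b q Hq) as [Pb [Cp [HCp HPb]]].
  destruct (qpoch_lower b q Hq Hb) as [db [Hdb Hdbn]].
  assert (HPdb: db <= Cnorm Pb) by (apply (limit_lower (qpoch b q) Pb Cp q db); auto; lra).
  assert (HPnz: Pb <> C0) by (intro E; rewrite E, Cnorm_C0 in HPdb; lra).
  destruct (XX_bound q x (q * q) Hq ltac:(nra) Hb) as [CX [HCX HX]].
  set (K2 := CX * q / ((1 - q) * (1 - q)) + Cp / (db * db)).
  assert (HK2: 0 <= K2).
  { unfold K2. apply Rplus_le_le_0_compat; apply Rdiv_le_0_compat; nra. }
  assert (Hmain: forall j N, Cnorm (Csub (Csum (XX q x j) (S N)) (Cinv Pb)) <= K2 * q ^ N).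
  { intros j N.
    eapply Rle_trans. apply (Cnorm_tri3 _ (Cinv (qpoch b q (j + N)))).
    unfold K2. rewrite Rmult_plus_distr_r. apply Rplus_le_compat.
    - pose proof (tannery_id q x j N Hq Hb) as HT. fold b in HT. rewrite <- HT, <- Csum_sub.
      eapply Rle_trans. apply Csum_norm.
      apply Rle_trans with (Rsum (fun a => CX * q / (1 - q) * q ^ N * q ^ a) (S N)).
      + apply Rsum_le. intros a Ha.
        replace (Csub (XX q x j a) (Cmul (XX q x j a) (Cmul (RtoC (PR q N a)) (qpoch (RtoC q) q a))))
          with (Cmul (XX q x j a) (Csub C1 (Cmul (RtoC (PR q N a)) (qpoch (RtoC q) q a)))) by ring.
        rewrite Cnorm_mul, rho_eq by (auto; lia). rewrite Cnorm_sub_sym.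
        pose proof (pow_le1 q (N - a) ltac:(lra)). pose proof (pow_le q (N - a) ltac:(lra)).
        pose proof (qpoch_real_near1 (q * q ^ (N - a)) q a Hq ltac:(split; nra)).
        pose proof (Rsum_geom_le q a ltac:(lra)).
        pose proof (HX j a).
        assert (E: (q * q) ^ a * (q * q ^ (N - a)) = q * q ^ N * q ^ a).
        { rewrite Rpow_mult_distr. replace N with (a + (N - a))%nat at 2 by lia. rewrite pow_add. ring. }
        set (Y := Cnorm (Csub (qpoch (RtoC (q * q ^ (N - a))) q a) C1)) in *.
        assert (Y <= q * q ^ (N - a) / (1 - q)).
        { eapply Rle_trans. apply H1. unfold Rdiv. apply Rmult_le_compat_l; nra. }
        assert (0 <= Y) by apply Cnorm_ge0.
        pose proof (Cnorm_ge0 (XX q x j a)).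
        apply Rle_trans with (CX * (q * q) ^ a * (q * q ^ (N - a) / (1 - q))).
        apply Rmult_le_compat; auto.
        replace (CX * (q * q) ^ a * (q * q ^ (N - a) / (1 - q))) with (CX / (1 - q) * ((q * q) ^ a * (q * q ^ (N - a)))) by (field; lra).
        rewrite E. right. field. lra.
      + rewrite Rsum_scal. pose proof (Rsum_geom_le q (S N) ltac:(lra)).
        replace (CX * q / ((1 - q) * (1 - q)) * q ^ N) with (CX * q / (1 - q) * q ^ N * / (1 - q)) by (field; lra).
        apply Rmult_le_compat_l; auto.
        apply Rmult_le_pos; [apply Rdiv_le_0_compat; nra | apply pow_le; lra].
    - eapply Rle_trans. apply (Cinv_diff _ _ db); auto.
      eapply Rle_trans. apply Rmult_le_compat_r. apply Rlt_le, Rinv_0_lt_compat; nra. apply HPb.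
      rewrite pow_add. pose proof (pow_le1 q j ltac:(lra)). pose proof (pow_le q j ltac:(lra)).
      pose proof (pow_le q N ltac:(lra)).
      unfold Rdiv. replace (Cp * (q ^ j * q ^ N) * / (db * db)) with ((Cp * / (db * db) * q ^ N) * q ^ j) by ring.
      replace (Cp * / (db * db) * q ^ N) with (Cp * / (db * db) * q ^ N * 1) at 2 by ring.
      apply Rmult_le_compat_l; auto. apply Rmult_le_pos; auto. apply Rmult_le_pos; auto.
      apply Rlt_le, Rinv_0_lt_compat; nra. }
  exists Pb, Cp, (K2 / q + / db). split; auto. split; auto. split.
  { apply Rplus_le_le_0_compat. apply Rdiv_le_0_compat; lra. apply Rlt_le, Rinv_0_lt_compat; lra. }
  split; auto.
  intros j K. destruct K.
  - simpl. replace (Csub C0 (Cinv Pb)) with (Copp (Cinv Pb)) by ring.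
    rewrite Cnorm_opp, Cnorm_inv by auto.
    assert (/ Cnorm Pb <= / db) by (apply Rinv_le_contravar; lra).
    assert (0 <= K2 / q) by (apply Rdiv_le_0_compat; lra). lra.
  - eapply Rle_trans. apply Hmain. pose proof (pow_le q K ltac:(lra)).
    replace (K2 * q ^ K) with (K2 / q * q ^ S K) by (simpl; field; lra).
    apply Rmult_le_compat_r. apply pow_le; lra.
    assert (0 <= / db) by (apply Rlt_le, Rinv_0_lt_compat; lra). lra.
Qed.

Lemma Csum_extend g k N : (k <= N)%nat ->
  Csum g k = Csum (fun j => if Nat.ltb j k then g j else C0) N.
Proof.
  intro H. replace N with (k + (N - k))%nat by lia. rewrite Csum_split.
  rewrite (Csum_zero (fun i => if Nat.ltb (k + i) k then g (k + i)%nat else C0)).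
  2:{ intros i _. replace (Nat.ltb (k + i) k) with false by (symmetry; apply Nat.ltb_ge; lia). auto. }
  rewrite (Csum_ext (fun j => if Nat.ltb j k then g j else C0) g).
  ring. intros i Hi. replace (Nat.ltb i k) with true by (symmetry; apply Nat.ltb_lt; lia). auto.
Qed.

Lemma Csum_shift g j N :
  Csum (fun m => if Nat.leb j m then g (m - j)%nat else C0) N = Csum g (N - j).
Proof.
  destruct (Compare_dec.le_lt_dec j N).
  - replace N with (j + (N - j))%nat at 1 by lia. rewrite Csum_split.
    rewrite Csum_zero. 2:{ intros i Hi. replace (Nat.leb j i) with false by (symmetry; apply Nat.leb_gt; lia). auto. }
    rewrite (Csum_ext _ g). ring.
    intros i Hi. replace (Nat.leb j (j + i)) with true by (symmetry; apply Nat.leb_le; lia). f_equal; lia.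
  - replace (N - j)%nat with O by lia. simpl. apply Csum_zero. intros i Hi.
    replace (Nat.leb j i) with false by (symmetry; apply Nat.leb_gt; lia). auto.
Qed.

Lemma reindex (f : nat -> nat -> nat -> Cx) N :
  Csum (fun m => Csum (fun n => Csum (fun j => f j (m - j)%nat (n - j)%nat) (S (Nat.min m n))) N) N
  = Csum (fun j => Csum (fun a => Csum (fun b => f j a b) (N - j)) (N - j)) N.
Proof.
  rewrite (Csum_ext _ (fun m => Csum (fun n => Csum (fun j =>
      if Nat.leb j m then (if Nat.leb j n then f j (m - j)%nat (n - j)%nat else C0) else C0) N) N)).
  2:{ intros m Hm. apply Csum_ext. intros n Hn. rewrite (Csum_extend _ _ N) by lia.
      apply Csum_ext. intros j Hj.
      destruct (Nat.ltb_spec j (S (Nat.min m n))), (Nat.leb_spec j m), (Nat.leb_spec j n); auto; lia. }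
  rewrite (Csum_ext _ (fun m => Csum (fun j => Csum (fun n =>
      if Nat.leb j m then (if Nat.leb j n then f j (m - j)%nat (n - j)%nat else C0) else C0) N) N))
    by (intros; apply Csum_swap).
  rewrite Csum_swap. apply Csum_ext. intros j Hj.
  rewrite (Csum_ext _ (fun m => if Nat.leb j m then Csum (fun b => f j (m - j)%nat b) (N - j) else C0)).
  2:{ intros m Hm. destruct (Nat.leb j m). rewrite <- Csum_shift. auto. apply Csum_zero; auto. }
  rewrite (Csum_shift (fun a => Csum (fun b => f j a b) (N - j))). auto.
Qed.

Definition hterm (q : R) (z1 z2 : Cx) (m n j : nat) : Cx :=
    Cmul (Cmul (Cmul (qbinom q m j) (qbinom q n j))
               (Cmul (RtoC (q ^ ((m - j) * (n - j)) * (-1) ^ j))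
                     (qpoch (RtoC q) q j)))
         (Cmul (Cpow z1 (m - j)) (Cpow z2 (n - j))).

Definition Wt (q : R) (z : Cx) (j : nat) : Cx :=
  Cmul (Cdiv (RtoC (q ^ (j * j))) (qpoch (RtoC q) q j)) (Cpow (Copp z) j).

Definition DEN q c d z1 z2 m n :=
  Cmul (Cmul (qpoch (RtoC q) q m) (qpoch (Cmul (Cmul c z1) (RtoC q)) q m))
       (Cmul (qpoch (RtoC q) q n) (qpoch (Cmul (Cmul d z2) (RtoC q)) q n)).

Lemma Qnz q a : 0 < q < 1 -> qpoch (RtoC q) q a <> C0.
Proof. intro Hq. rewrite qpoch_qR. apply RtoC_nz. pose proof (qR_pos q a Hq). lra. Qed.

Lemma core q c d z1 z2 j a b : 0 < q < 1 ->
  (forall i, Csub C1 (Cmul (Cmul (Cmul c z1) (RtoC q)) (RtoC (q ^ i))) <> C0) ->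
  (forall i, Csub C1 (Cmul (Cmul (Cmul d z2) (RtoC q)) (RtoC (q ^ i))) <> C0) ->
  Cdiv (Cmul (Cmul (RtoC (q ^ ((j + a) * (j + a) + (j + b) * (j + b) - (j + a) * (j + b))))
                   (hterm q z1 z2 (j + a) (j + b) j))
             (Cmul (Cpow c (j + a)) (Cpow d (j + b))))
       (DEN q c d z1 z2 (j + a) (j + b))
  = Cmul (Wt q (Cmul c d) j) (Cmul (XX q (Cmul c z1) j a) (XX q (Cmul d z2) j b)).
Proof.
  intros Hq H1 H2. unfold hterm, DEN, Wt, XX, qbinom.
  replace (j + a - j)%nat with a by lia. replace (j + b - j)%nat with b by lia.
  assert (Ee: ((j + a) * (j + a) + (j + b) * (j + b) - (j + a) * (j + b))%nat
              = (j * j + (a * a + j * a) + (b * b + j * b) - a * b)%nat) by nia.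
  rewrite Ee.
  assert (Ep: q ^ (j * j + (a * a + j * a) + (b * b + j * b) - a * b)
              = q ^ (j * j) * q ^ (a * a + j * a) * q ^ (b * b + j * b) * / q ^ (a * b)).
  { assert (q ^ (a * b) <> 0) by (apply pow_nonzero; lra).
    assert (HH: (j * j + (a * a + j * a) + (b * b + j * b))%nat
      = ((j * j + (a * a + j * a) + (b * b + j * b) - a * b) + a * b)%nat) by nia.
    rewrite <- (pow_add q (j * j)), <- pow_add, HH, pow_add. rewrite Rmult_assoc, Rinv_r, Rmult_1_r; auto. }
  rewrite Ep. rewrite !RtoC_mul, RtoC_inv by (apply pow_nonzero; lra).
  replace (Copp (Cmul c d)) with (Cmul (RtoC (-1)) (Cmul c d)) by (apply Cx_ext; simpl; ring).
  rewrite !Cpow_mul, !Cpow_add, !Cpow_R.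
  pose proof (Qnz q j Hq). pose proof (Qnz q a Hq). pose proof (Qnz q b Hq).
  pose proof (Qnz q (j + a) Hq). pose proof (Qnz q (j + b) Hq).
  pose proof (qpoch_nz _ q (j + a) H1). pose proof (qpoch_nz _ q (j + b) H2).
  field. repeat split; auto. apply RtoC_nz. apply pow_nonzero. lra.
Qed.

Lemma Cdiv_sum A s B D k : Cdiv (Cmul (Cmul A (Csum s k)) B) D = Csum (fun j => Cdiv (Cmul (Cmul A (s j)) B) D) k.
Proof. induction k; simpl. unfold Cdiv; ring. rewrite <- IHk. unfold Cdiv; ring. Qed.

Definition UU q c d z1 z2 j a b :=
  Cmul (Wt q (Cmul c d) j) (Cmul (XX q (Cmul c z1) j a) (XX q (Cmul d z2) j b)).

Lemma term_decomp q c d z1 z2 m n : 0 < q < 1 ->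
  (forall i, Csub C1 (Cmul (Cmul (Cmul c z1) (RtoC q)) (RtoC (q ^ i))) <> C0) ->
  (forall i, Csub C1 (Cmul (Cmul (Cmul d z2) (RtoC q)) (RtoC (q ^ i))) <> C0) ->
  cor72_term q c d z1 z2 m n = Csum (fun j => UU q c d z1 z2 j (m - j)%nat (n - j)%nat) (S (Nat.min m n)).
Proof.
  intros Hq H1 H2. unfold cor72_term.
  change (h2D q m n z1 z2) with (Csum (hterm q z1 z2 m n) (S (Nat.min m n))).
  rewrite Cdiv_sum. apply Csum_ext. intros j Hj.
  pose proof (core q c d z1 z2 j (m - j) (n - j) Hq H1 H2) as H.
  replace (j + (m - j))%nat with m in H by lia. replace (j + (n - j))%nat with n in H by lia.
  unfold DEN in H. rewrite H. reflexivity.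
Qed.

Lemma hyp_conv q x : 0 < q < 1 ->
  (forall r : nat, (1 <= r)%nat -> x <> RtoC (/ q ^ r)) ->
  forall i, Csub C1 (Cmul (Cmul x (RtoC q)) (RtoC (q ^ i))) <> C0.
Proof.
  intros Hq H i E. apply (H (S i) ltac:(lia)).
  assert (Hp: q ^ S i <> 0) by (apply pow_nonzero; lra).
  assert (E2: Cmul x (RtoC (q ^ S i)) = C1).
  { change (q ^ S i) with (q * q ^ i). rewrite RtoC_mul.
    replace (Cmul x (Cmul (RtoC q) (RtoC (q ^ i)))) with (Csub C1 (Csub C1 (Cmul (Cmul x (RtoC q)) (RtoC (q ^ i))))) by ring.
    rewrite E. ring. }
  replace x with (Cmul (Cmul x (RtoC (q ^ S i))) (RtoC (/ q ^ S i))).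
  rewrite E2. ring.
  rewrite RtoC_inv by auto. field. apply RtoC_nz; auto.
Qed.

Lemma pow_split q m j : (j <= m)%nat -> q ^ (m - j) * q ^ j = q ^ m.
Proof. intro H. rewrite <- pow_add. f_equal. lia. Qed.

Lemma Wt_bound q z : 0 < q < 1 -> exists CW, 0 <= CW /\ forall j, Cnorm (Wt q z j) <= CW * (q * q * q) ^ j.
Proof.
  intro Hq. destruct (qq_lower q Hq) as [dq [Hdq Hdqn]].
  destruct (G1r q (Cnorm z) (q * q * q) Hq (Cnorm_ge0 z)) as [M [HM0 HM]]. 
  { apply Rmult_lt_0_compat; [apply Rmult_lt_0_compat|]; lra. }
  exists (M / dq). split. apply Rdiv_le_0_compat; lra. intro j.
  unfold Wt. rewrite Cnorm_mul, Cnorm_div by (apply Qnz; auto).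
  rewrite Cnorm_R, Cnorm_pow, Cnorm_opp, Rabs_pos_eq by (apply pow_le; lra).
  specialize (Hdqn j). specialize (HM j).
  pose proof (pow_le q (j * j) ltac:(lra)). pose proof (pow_le (Cnorm z) j (Cnorm_ge0 z)).
  unfold Rdiv. replace (q ^ (j * j) * / Cnorm (qpoch (RtoC q) q j) * Cnorm z ^ j)
    with ((q ^ (j * j) * Cnorm z ^ j) * / Cnorm (qpoch (RtoC q) q j)) by ring.
  replace (M * / dq * (q * q * q) ^ j) with ((M * (q * q * q) ^ j) * / dq) by ring.
  apply Rmult_le_compat; auto. apply Rmult_le_pos; auto.
  apply Rlt_le, Rinv_0_lt_compat; lra. apply Rinv_le_contravar; lra.
Qed.

Lemma cube_split q j m n : 0 < q < 1 -> (j <= m)%nat -> (j <= n)%nat ->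
  (q * q * q) ^ j * (q ^ (m - j) * q ^ (n - j)) = q ^ m * q ^ n * q ^ j.
Proof.
  intros Hq Hm Hn. rewrite !Rpow_mult_distr.
  rewrite <- (pow_split q m j Hm), <- (pow_split q n j Hn). ring.
Qed.

Theorem corollary7p2 (q : R) (c d z1 z2 : Cx)
  (hq0 : 0 < q) (hq1 : q < 1)
  (hc : forall r : nat, (1 <= r)%nat -> Cmul c z1 <> RtoC (/ q ^ r))
  (hd : forall r : nat, (1 <= r)%nat -> Cmul d z2 <> RtoC (/ q ^ r)) :
  (exists B : R, forall N : nat,
     Rsum (fun m => Rsum (fun n => Cnorm (cor72_term q c d z1 z2 m n)) N) N <= B) /\
  (exists A P1 P2 : Cx,
     C_cv (Aq_partial q (Cmul c d)) A /\
     C_cv (qpoch (Cmul (Cmul c z1) (RtoC q)) q) P1 /\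
     C_cv (qpoch (Cmul (Cmul d z2) (RtoC q)) q) P2 /\
     C_cv (fun N => Csum (fun m => Csum (fun n => cor72_term q c d z1 z2 m n) N) N)
          (Cdiv A (Cmul P1 P2))).
Proof.
  assert (Hq: 0 < q < 1) by lra.
  pose proof (hyp_conv q _ Hq hc) as H1. pose proof (hyp_conv q _ Hq hd) as H2.
  destruct (Wt_bound q (Cmul c d) Hq) as [CW [HCW HW]].
  destruct (XX_bound q (Cmul c z1) q Hq hq0 H1) as [CX1 [HCX1 HX1]].
  destruct (XX_bound q (Cmul d z2) q Hq hq0 H2) as [CX2 [HCX2 HX2]].
  assert (Hterm: forall m n, Cnorm (cor72_term q c d z1 z2 m n) <= CW * CX1 * CX2 / (1 - q) * (q ^ m * q ^ n)).
  { intros m n. rewrite term_decomp by auto.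
    eapply Rle_trans. apply Csum_norm.
    apply Rle_trans with (Rsum (fun j => CW * CX1 * CX2 * (q ^ m * q ^ n) * q ^ j) (S (Nat.min m n))).
    - apply Rsum_le. intros j Hj. unfold UU. rewrite !Cnorm_mul.
      specialize (HW j). specialize (HX1 j (m - j)%nat). specialize (HX2 j (n - j)%nat).
      pose proof (Cnorm_ge0 (Wt q (Cmul c d) j)). pose proof (Cnorm_ge0 (XX q (Cmul c z1) j (m - j))).
      pose proof (Cnorm_ge0 (XX q (Cmul d z2) j (n - j))).
      apply Rle_trans with (CW * (q * q * q) ^ j * (CX1 * q ^ (m - j) * (CX2 * q ^ (n - j)))).
      apply Rmult_le_compat; auto. apply Rmult_le_pos; auto.
      apply Rmult_le_compat; auto.
      assert (E := cube_split q j m n Hq ltac:(lia) ltac:(lia)).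
      replace (CW * CX1 * CX2 * (q ^ m * q ^ n) * q ^ j) with (CW * CX1 * CX2 * ((q * q * q) ^ j * (q ^ (m - j) * q ^ (n - j)))) by (rewrite E; ring).
      right; ring.
    - rewrite Rsum_scal. pose proof (Rsum_geom_le q (S (Nat.min m n)) ltac:(lra)).
      pose proof (pow_le q m ltac:(lra)). pose proof (pow_le q n ltac:(lra)).
      replace (CW * CX1 * CX2 / (1 - q) * (q ^ m * q ^ n)) with (CW * CX1 * CX2 * (q ^ m * q ^ n) * / (1 - q)) by (field; lra).
      apply Rmult_le_compat_l; auto. apply Rmult_le_pos. apply Rmult_le_pos; auto. apply Rmult_le_pos; auto.
      apply Rmult_le_pos; auto. }
  split.
  { exists (CW * CX1 * CX2 / (1 - q) * (/ (1 - q) * / (1 - q))). intro N.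
    set (K := CW * CX1 * CX2 / (1 - q)).
    assert (HK: 0 <= K) by (unfold K; apply Rdiv_le_0_compat; [apply Rmult_le_pos; [apply Rmult_le_pos|]|]; lra).
    apply Rle_trans with (Rsum (fun m => K * q ^ m * / (1 - q)) N).
    - apply Rsum_le. intros m Hm.
      apply Rle_trans with (Rsum (fun n => K * q ^ m * q ^ n) N).
      apply Rsum_le. intros n Hn. specialize (Hterm m n). fold K in Hterm. lra.
      rewrite Rsum_scal. apply Rmult_le_compat_l. apply Rmult_le_pos; auto. apply pow_le; lra.
      apply Rsum_geom_le; lra.
    - rewrite (Rsum_ext _ (fun m => (K * / (1 - q)) * q ^ m)) by (intros; ring).
      rewrite Rsum_scal. rewrite <- Rmult_assoc. apply Rmult_le_compat_l.
      apply Rmult_le_pos; auto. apply Rlt_le, Rinv_0_lt_compat; lra. apply Rsum_geom_le; lra. }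
  destruct (X_tail q (Cmul c z1) Hq H1) as [P1 [Cp1 [K1 [HP1 [HCp1 [HK1 [HQ1 HT1]]]]]]].
  destruct (X_tail q (Cmul d z2) Hq H2) as [P2 [Cp2 [K2 [HP2 [HCp2 [HK2 [HQ2 HT2]]]]]]].
  destruct (geom_limit (Csum (Wt q (Cmul c d))) CW q ltac:(lra) HCW) as [A HA].
  { intro n. simpl. replace (Csub (Cadd (Csum (Wt q (Cmul c d)) n) (Wt q (Cmul c d) n)) (Csum (Wt q (Cmul c d)) n))
      with (Wt q (Cmul c d) n) by ring.
    eapply Rle_trans. apply HW. apply Rmult_le_compat_l; auto.
    rewrite !Rpow_mult_distr. pose proof (pow_le q n ltac:(lra)). pose proof (pow_le1 q n ltac:(lra)).
    assert (0 <= q ^ n * q ^ n) by nra. nra. }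
  exists A, P1, P2. split; [|split; [|split]].
  - apply (C_cv_geom _ _ (CW / (1 - q)) q). lra. intro n. specialize (HA n).
    replace (CW / (1 - q) * q ^ n) with (CW * q ^ n / (1 - q)) by (field; lra). exact HA.
  - apply (C_cv_geom _ _ Cp1 q); auto. lra.
  - apply (C_cv_geom _ _ Cp2 q); auto. lra.
  - set (I1 := Cinv P1). set (I2 := Cinv P2).
    set (Dd := K1 * (Cnorm I2 + K2) + Cnorm I1 * K2).
    assert (HDd: 0 <= Dd) by (unfold Dd; pose proof (Cnorm_ge0 I1); pose proof (Cnorm_ge0 I2); nra).
    assert (Hprod: forall j K, Cnorm (Csub (Cmul (Csum (XX q (Cmul c z1) j) K) (Csum (XX q (Cmul d z2) j) K)) (Cmul I1 I2)) <= Dd * q ^ K).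
    { intros j K. set (s1 := Csum (XX q (Cmul c z1) j) K). set (s2 := Csum (XX q (Cmul d z2) j) K).
      replace (Csub (Cmul s1 s2) (Cmul I1 I2)) with (Cadd (Cmul (Csub s1 I1) s2) (Cmul I1 (Csub s2 I2))) by ring.
      eapply Rle_trans. apply Cnorm_add. rewrite !Cnorm_mul.
      specialize (HT1 j K). specialize (HT2 j K). fold s1 s2 I1 I2 in HT1, HT2.
      pose proof (pow_le q K ltac:(lra)). pose proof (pow_le1 q K ltac:(lra)).
      assert (Cnorm s2 <= Cnorm I2 + K2).
      { pose proof (Cnorm_tri3 s2 I2 C0). replace (Csub s2 C0) with s2 in H3 by ring.
        replace (Csub I2 C0) with I2 in H3 by ring. assert (K2 * q ^ K <= K2) by nra. lra. }
      pose proof (Cnorm_ge0 (Csub s1 I1)). pose proof (Cnorm_ge0 s2). pose proof (Cnorm_ge0 I1).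
      pose proof (Cnorm_ge0 (Csub s2 I2)).
      unfold Dd.
      assert (Cnorm (Csub s1 I1) * Cnorm s2 <= K1 * q ^ K * (Cnorm I2 + K2)) by (apply Rmult_le_compat; auto).
      assert (Cnorm I1 * Cnorm (Csub s2 I2) <= Cnorm I1 * (K2 * q ^ K)) by (apply Rmult_le_compat_l; auto).
      nra. }
    assert (HS: forall N, Csum (fun m => Csum (fun n => cor72_term q c d z1 z2 m n) N) N
       = Csum (fun j => Cmul (Wt q (Cmul c d) j) (Cmul (Csum (XX q (Cmul c z1) j) (N - j)) (Csum (XX q (Cmul d z2) j) (N - j)))) N).
    { intro N. rewrite (Csum_ext _ (fun m => Csum (fun n => Csum (fun j => UU q c d z1 z2 j (m - j)%nat (n - j)%nat) (S (Nat.min m n))) N)).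
      2:{ intros m _. apply Csum_ext. intros n _. apply term_decomp; auto. }
      rewrite (reindex (UU q c d z1 z2)). apply Csum_ext. intros j _.
      unfold UU.
      transitivity (Csum (fun a => Cmul (Cmul (Wt q (Cmul c d) j) (XX q (Cmul c z1) j a)) (Csum (XX q (Cmul d z2) j) (N - j))) (N - j)).
      { apply Csum_ext; intros a _. rewrite <- Csum_scal. apply Csum_ext; intros b _. ring. }
      rewrite Csum_scal_r, Csum_scal. ring. }
    apply (C_cv_geom _ _ (CW * Dd / (1 - q) + CW / (1 - q) * Cnorm (Cmul I1 I2)) q). lra.
    intro N. rewrite HS.
    replace (Cdiv A (Cmul P1 P2)) with (Cmul A (Cmul I1 I2)) by (unfold I1, I2; field; auto).
    replace (Csub (Csum (fun j => Cmul (Wt q (Cmul c d) j) (Cmul (Csum (XX q (Cmul c z1) j) (N - j)) (Csum (XX q (Cmul d z2) j) (N - j)))) N) (Cmul A (Cmul I1 I2)))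
      with (Cadd (Csum (fun j => Cmul (Wt q (Cmul c d) j) (Csub (Cmul (Csum (XX q (Cmul c z1) j) (N - j)) (Csum (XX q (Cmul d z2) j) (N - j))) (Cmul I1 I2))) N)
                 (Cmul (Csub (Csum (Wt q (Cmul c d)) N) A) (Cmul I1 I2))).
    2:{ rewrite (Csum_ext _ (fun j => Csub (Cmul (Wt q (Cmul c d) j) (Cmul (Csum (XX q (Cmul c z1) j) (N - j)) (Csum (XX q (Cmul d z2) j) (N - j)))) (Cmul (Wt q (Cmul c d) j) (Cmul I1 I2)))) by (intros; ring).
        rewrite Csum_sub, Csum_scal_r. ring. }
    eapply Rle_trans. apply Cnorm_add. rewrite Rmult_plus_distr_r. apply Rplus_le_compat.
    + eapply Rle_trans. apply Csum_norm.
      apply Rle_trans with (Rsum (fun j => CW * Dd * q ^ N * q ^ j) N).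
      * apply Rsum_le. intros j Hj. rewrite Cnorm_mul.
        specialize (HW j). specialize (Hprod j (N - j)%nat).
        pose proof (Cnorm_ge0 (Wt q (Cmul c d) j)).
        pose proof (Cnorm_ge0 (Csub (Cmul (Csum (XX q (Cmul c z1) j) (N - j)) (Csum (XX q (Cmul d z2) j) (N - j))) (Cmul I1 I2))).
        apply Rle_trans with (CW * (q * q * q) ^ j * (Dd * q ^ (N - j))).
        apply Rmult_le_compat; auto.
        pose proof (pow_split q N j ltac:(lia)) as HPS.
        pose proof (pow_le q j ltac:(lra)). pose proof (pow_le1 q j ltac:(lra)).
        pose proof (pow_le q N ltac:(lra)).
        replace (CW * (q * q * q) ^ j * (Dd * q ^ (N - j))) with (CW * Dd * q ^ N * q ^ j * q ^ j)
          by (rewrite <- HPS; rewrite !Rpow_mult_distr; set (t := q ^ (N - j)); ring).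
        assert (0 <= CW * Dd * q ^ N * q ^ j) by (repeat apply Rmult_le_pos; auto).
        set (X := CW * Dd * q ^ N * q ^ j) in *. nra.
      * rewrite Rsum_scal. pose proof (Rsum_geom_le q N ltac:(lra)).
        replace (CW * Dd / (1 - q) * q ^ N) with (CW * Dd * q ^ N * / (1 - q)) by (field; lra).
        apply Rmult_le_compat_l; auto. apply Rmult_le_pos. apply Rmult_le_pos; auto. apply pow_le; lra.
    + rewrite Cnorm_mul. specialize (HA N).
      replace (CW / (1 - q) * Cnorm (Cmul I1 I2) * q ^ N) with (CW * q ^ N / (1 - q) * Cnorm (Cmul I1 I2)) by (field; lra).
      apply Rmult_le_compat_r. apply Cnorm_ge0. exact HA.
Qed.
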